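(* Let $\{(\mathbf{x}_i,y_i)\}_{i=1}^m$ be training data with $\mathbf{x}_i\in\mathbb{R}^l$, $y_i\in\mathbb{R}$, let $k$ be a positive semidefinite kernel with kernel matrix $K\in\mathbb{R}^{m\times m}$, $K_{ij}=k(\mathbf{x}_i,\mathbf{x}_j)$, and let $K_{iM}$ denote the $i$-th row of $K$. Let $\lambda>0$, $\tau\ge 0$, and $L_\tau(\xi)=\frac12\min\{\xi^2,\tau^2\}$. Consider the primal robust LSSVM problem $$\min_{\alpha\in\mathbb{R}^m,\,b\in\mathbb{R}}\ \frac{\lambda}{2}\alpha^\top K\alpha+\frac1m\sum_{i=1}^m L_\tau\big(y_i-K_{iM}\alpha-b\big).$$ Then any stationary point of this problem can be obtained by solving an iteratively re-weighted LSSVM $$(\alpha^{(t)},b^{(t)})=\arg\min_{\alpha\in\mathbb{R}^m,\,b\in\mathbb{R}}\ \frac{\lambda}{2}\alpha^\top K\alpha+\frac{1}{2m}\sum_{i=1}^m\omega_i^{(t-1)}\big(y_i-K_{iM}\alpha-b\big)^2,$$ where $\omega_i^{(t)}$ is the value of the weight $\omega_i$ at iteration $t$, given by $\omega_i^{(t)}=1$ if $|\xi_i^{(t)}|\le\tau$ and $\omega_i^{(t)}=0$ if $|\xi_i^{(t)}|>\tau$, with $\xi_i^{(t)}=y_i-K_{iM}\alpha^{(t)}-b^{(t)}$.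
   Context: The weight update corresponds to $\omega^{(t)}\in\arg\min_{\omega\in\mathbb{R}_+^m}J(\alpha^{(t)},b^{(t)},\omega)$, where $J(\alpha,b,\omega)=\frac{\lambda}{2}\alpha^\top K\alpha+\frac1m\sum_{i=1}^m\frac12\omega_i\xi_i^2+\frac1m\sum_{i=1}^m\frac{\tau^2}{2}(1-\omega_i)_+$ and $\xi_i=y_i-K_{iM}\alpha-b$; the iteration alternates minimization of $J$ in $(\alpha,b)$ and in $\omega$. *)

(* Defs.v *)
From HB Require Import structures.
From mathcomp Require Import all_boot all_order all_algebra.
Set Implicit Arguments. Unset Strict Implicit. Unset Printing Implicit Defensive.
Import Order.TTheory GRing.Theory Num.Theory.
Local Open Scope ring_scope.

Section RobustLSSVM.
Variable R : realFieldType.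

Definition psd_kernel (l : nat) (k : 'rV[R]_l -> 'rV[R]_l -> R) : Prop :=
  (forall x z, k x z = k z x) /\
  (forall (n : nat) (xs : 'I_n -> 'rV[R]_l) (c : 'cV[R]_n),
      0 <= (c^T *m (\matrix_(i, j) k (xs i) (xs j)) *m c) 0 0).

Definition kmat (l m : nat) (k : 'rV[R]_l -> 'rV[R]_l -> R)
  (xs : 'I_m -> 'rV[R]_l) : 'M[R]_m := \matrix_(i, j) k (xs i) (xs j).

Definition Ltau (tau xi : R) : R := Num.min (xi ^+ 2) (tau ^+ 2) / 2.

Definition resid (m : nat) (K : 'M[R]_m) (y : 'I_m -> R)
  (alpha : 'cV[R]_m) (b : R) (i : 'I_m) : R :=
  y i - (row i K *m alpha) 0 0 - b.

Definition robust_obj (m : nat) (K : 'M[R]_m) (y : 'I_m -> R) (lam tau : R)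
  (alpha : 'cV[R]_m) (b : R) : R :=
  lam / 2 * (alpha^T *m K *m alpha) 0 0
  + m%:R^-1 * \sum_(i < m) Ltau tau (resid K y alpha b i).

Definition weighted_obj (m : nat) (K : 'M[R]_m) (y : 'I_m -> R) (lam : R)
  (w : 'I_m -> R) (alpha : 'cV[R]_m) (b : R) : R :=
  lam / 2 * (alpha^T *m K *m alpha) 0 0
  + (2 * m%:R)^-1 * \sum_(i < m) w i * (resid K y alpha b i) ^+ 2.

Definition weight (tau xi : R) : R := if `|xi| <= tau then 1 else 0.

(* stationary point of a (nonsmooth) function of (alpha, b) in the
   directional (d-stationarity) sense: the lower one-sided directional
   derivative is nonnegative in every direction, i.e.
   liminf_{t->0+} (F(z + t d) - F(z))/t >= 0 for all d. *)
Definition stationary (m : nat) (F : 'cV[R]_m -> R -> R)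
  (alpha : 'cV[R]_m) (b : R) : Prop :=
  forall (da : 'cV[R]_m) (db : R) (eps : R), 0 < eps ->
    exists2 delta : R, 0 < delta &
      forall t : R, 0 < t -> t < delta ->
        - (eps * t) <= F (alpha + t *: da) (b + t * db) - F alpha b.

End RobustLSSVM.

(* Main.v *)
Require Import Defs.
From HB Require Import structures.
From mathcomp Require Import all_boot all_order all_algebra.
From mathcomp Require Import ring lra.
Import Order.TTheory GRing.Theory Num.Theory.
Local Open Scope ring_scope.

Section Aux.
Variable R : realFieldType.
Variable m : nat.
Implicit Types (K : 'M[R]_m) (alpha da : 'cV[R]_m).

Definition qf K (u v : 'cV[R]_m) : R := (u^T *m K *m v) 0 0.

Lemma qf_exp K alpha da (t : R) :
  qf K (alpha + t *: da) (alpha + t *: da) =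
  qf K alpha alpha + t * (qf K alpha da + qf K da alpha) + t ^+ 2 * qf K da da.
Proof.
rewrite /qf [_^T]linearD /= [(_ *: _)^T]linearZ /= !mulmxDl !mulmxDr -!scalemxAl -!scalemxAr.
rewrite !mxE; ring.
Qed.

Lemma resid_exp K y alpha da b db (t : R) i :
  resid K y (alpha + t *: da) (b + t * db) i =
  resid K y alpha b i - t * ((row i K *m da) 0 0 + db).
Proof.
rewrite /resid mulmxDr -scalemxAr [in LHS]mxE.
rewrite (_ : (t *: (row i K *m da)) 0 0 = t * (row i K *m da) 0 0); last by rewrite mxE.
ring.
Qed.

Lemma Ltau_maj (tau x x' : R) : 0 <= tau ->
  Ltau tau x' - Ltau tau x <= weight tau x * (x' ^+ 2 - x ^+ 2) / 2.
Proof.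
move=> ht; rewrite /Ltau /weight.
have h1 : Num.min (x' ^+ 2) (tau ^+ 2) <= x' ^+ 2 by rewrite ge_min lexx.
have h2 : Num.min (x' ^+ 2) (tau ^+ 2) <= tau ^+ 2 by rewrite ge_min lexx orbT.
case: ifP => hx.
- move: hx; rewrite ler_norml => /andP [a1 a2].
  rewrite (min_l (_ : x ^+ 2 <= tau ^+ 2)); last by nra.
  lra.
- move/negbT: hx; rewrite -ltNge ltr_normr => /orP hx.
  rewrite (min_r (_ : tau ^+ 2 <= x ^+ 2)); last by case: hx => hx; nra.
  lra.
Qed.

End Aux.
Arguments qf {R m}.
Arguments qf_exp {R m}.
Arguments resid_exp {R m}.
Arguments Ltau_maj {R}.

Theorem proposition1 (R : realFieldType) (l m : nat)
  (xs : 'I_m -> 'rV[R]_l) (y : 'I_m -> R)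
  (k : 'rV[R]_l -> 'rV[R]_l -> R) (lam tau : R)
  (hm : (0 < m)%N) (hk : psd_kernel k) (hlam : 0 < lam) (htau : 0 <= tau)
  (alpha : 'cV[R]_m) (b : R) :
  stationary (robust_obj (kmat k xs) y lam tau) alpha b ->
  let w := fun i => weight tau (resid (kmat k xs) y alpha b i) in
  forall (alpha' : 'cV[R]_m) (b' : R),
    weighted_obj (kmat k xs) y lam w alpha b
      <= weighted_obj (kmat k xs) y lam w alpha' b'.
Proof.
move=> hst w alpha' b'.
set K := kmat k xs.
set da := alpha' - alpha; set db := b' - b.
set x := fun i => resid K y alpha b i.
set r := fun i => (row i K *m da) 0 0 + db.
set c := (m%:R : R)^-1.
have hc : 0 <= c by rewrite invr_ge0 ler0n.
set B := lam / 2 * (qf K alpha da + qf K da alpha)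
   + c / 2 * \sum_(i < m) (- (2 * w i * x i * r i)).
set C := lam / 2 * qf K da da + c / 2 * \sum_(i < m) w i * r i ^+ 2.
have hw0 : forall i, 0 <= w i by move=> i; rewrite /w /weight; case: ifP.
have hC : 0 <= C.
  apply: addr_ge0.
    apply: mulr_ge0; first lra.
    by case: hk => _ /(_ m xs da).
  apply: mulr_ge0; first lra.
  by apply: sumr_ge0 => i _; apply: mulr_ge0 => //; apply: sqr_ge0.
have hexp : forall t, weighted_obj K y lam w (alpha + t *: da) (b + t * db)
   = weighted_obj K y lam w alpha b + t * B + t ^+ 2 * C.
  move=> t; rewrite /weighted_obj.
  have -> : \sum_(i < m) w i * resid K y (alpha + t *: da) (b + t * db) i ^+ 2
     = \sum_(i < m) w i * x i ^+ 2 + t * \sum_(i < m) (- (2 * w i * x i * r i))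
       + t ^+ 2 * \sum_(i < m) w i * r i ^+ 2.
    rewrite !mulr_sumr -!big_split /=; apply: eq_bigr => i _.
    rewrite resid_exp /x /r; ring.
  rewrite -/(qf K _ _) qf_exp -/(qf K _ _) /B /C invfM -/c; ring.
have hmaj : forall a2 b2,
  robust_obj K y lam tau a2 b2 - robust_obj K y lam tau alpha b <=
  weighted_obj K y lam w a2 b2 - weighted_obj K y lam w alpha b.
  move=> a2 b2; rewrite /robust_obj /weighted_obj invfM -/c.
  set q1 := _ * (_ 0 0); set q2 := _ * (_ 0 0).
  have e1 : q1 + c * \sum_(i < m) Ltau tau (resid K y a2 b2 i) -
     (q2 + c * \sum_(i < m) Ltau tau (resid K y alpha b i)) =
     q1 - q2 + c * \sum_(i < m) (Ltau tau (resid K y a2 b2 i) - Ltau tau (x i)).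
    rewrite sumrB; ring.
  have e2 : q1 + 2^-1 * c * \sum_(i < m) w i * resid K y a2 b2 i ^+ 2 -
     (q2 + 2^-1 * c * \sum_(i < m) w i * resid K y alpha b i ^+ 2) =
     q1 - q2 + c * \sum_(i < m) (w i * (resid K y a2 b2 i ^+ 2 - x i ^+ 2) / 2).
    have e3 : \sum_(i < m) (w i * (resid K y a2 b2 i ^+ 2 - x i ^+ 2) / 2) =
      2^-1 * (\sum_(i < m) w i * resid K y a2 b2 i ^+ 2 - \sum_(i < m) w i * resid K y alpha b i ^+ 2).
      rewrite -sumrB mulr_sumr; apply: eq_bigr => i _; rewrite /x; ring.
    rewrite e3; ring.
  rewrite e1 e2 lerD2l; apply: ler_wpM2l => //; apply: ler_sum => i _.
  exact: Ltau_maj.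
have key : forall eps, 0 < eps -> - eps <= B + C.
  move=> eps he.
  have [delta hd hdel] := hst da db eps he.
  set t := Num.min (delta / 2) 1.
  have ht0 : 0 < t by rewrite lt_min ltr01 andbT; lra.
  have ht1 : t <= 1 by rewrite ge_min lexx orbT.
  have htd : t < delta by apply: (le_lt_trans (_ : t <= delta / 2)); [rewrite ge_min lexx | lra].
  have h1 := hdel t ht0 htd.
  have h2 := hmaj (alpha + t *: da) (b + t * db).
  rewrite hexp in h2.
  have h3 : 0 <= t * C * (1 - t) by apply: mulr_ge0; [apply: mulr_ge0; lra | lra].
  have h4 : 0 <= t * (B + C + eps) by nra.
  have := h4; rewrite pmulr_rge0 // => h5; lra.
have hfin := hexp 1.
have e : alpha + 1 *: da = alpha' by rewrite scale1r /da addrC subrK.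
have e' : b + 1 * db = b' by rewrite mul1r /db addrC subrK.
rewrite e e' in hfin; rewrite hfin.
have : 0 <= B + C.
  rewrite leNgt; apply/negP => hneg.
  have := key (- (B + C) / 2); lra.
lra.
Qed.
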